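(* Assume the setup and monomial order in the context, with $b_{v;j,i}=\sum_{s=1}^n v_{j,r(s)}v^\dagger_{s,r(i)}-\delta_{j,i}1$. Every overlap ambiguity $(g_1,g_2,b_1,b_2)$ of $R$ with respect to $\le$ (i.e. $g_1,g_2\in R$ nonzero, $b_1,b_2$ monomials with $(b_1,b_2)\ne(1,1)$, $\mathrm{tip}(g_1)\,b_2=b_1\,\mathrm{tip}(g_2)$, $\mathrm{tip}(g_2)$ does not divide $b_2$ and $\mathrm{tip}(g_1)$ does not divide $b_1$) is of the form $$(b_{v^\dagger;\ell,1},\ b_{v;1,i},\ v^\dagger_{\ell,n},\ v^\dagger_{1,r(i)})$$ for some $v\in M$ and $(\ell,i)\in[n]^2$. Moreover every overlap ambiguity resolves, i.e. there are reductions $\varphi_1,\varphi_2$ by $R$ with $\varphi_1((\mathrm{tip}(g_1)-g_1/\lambda_1)b_2)=\varphi_2(b_1(\mathrm{tip}(g_2)-g_2/\lambda_2))$, $\lambda_m$ the coefficient of $\mathrm{tip}(g_m)$ in $g_m$.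
   Context: Let $k$ be a field and $n\ge 2$ an integer; write $[n]=\{1,\dots,n\}$ and $r(i)=n+1-i$. Let $X=\{u_{j,i},u^*_{j,i}:(j,i)\in[n]^2\}$ be a set of $2n^2$ distinct symbols and let $*$ be the involution of $X$ exchanging $u_{j,i}$ and $u^*_{j,i}$. Let $k\langle X\rangle$ be the free unital $k$-algebra on $X$. For an $n\times n$ matrix $v=(v_{j,i})$ with entries in $X$ define $n\times n$ matrices $v^t,v^\star,v^\dagger$ with entries in $X$ by $v^t_{j,i}=v_{i,j}$, $v^\star_{j,i}=(v_{r(j),r(i)})^*$, $v^\dagger_{j,i}=(v_{r(i),r(j)})^*$. Let $u=(u_{j,i})$ and $M=\{u,u^t,u^\star,u^\dagger\}$, and $R=\{\sum_{s=1}^n v_{j,r(s)}v^\dagger_{s,r(i)}-\delta_{j,i}1: v\in M,(j,i)\in[n]^2\}$. Monomial order: let $\le$ be the total order on $X$ with $u^*_{t,s}<u_{j,i}$ for all indices, $u_{t,s}<u_{j,i}$ iff $(t,s)<(j,i)$ lexicographically, and $u^*_{t,s}<u^*_{j,i}$ iff $(j,i)<(t,s)$ lexicographically; extend degree-lexicographically to monomials. $\mathrm{tip}(p)$ is the $\le$-largest monomial with nonzero coefficient in $p\ne0$. A one-step reduction by $0\ne p$ is a linear endomorphism of $k\langle X\rangle$ which, for some fixed monomials $a,c$, sends $a\,\mathrm{tip}(p)\,c$ to $a(\mathrm{tip}(p)-p/\lambda_p)c$ ($\lambda_p$ the coefficient of $\mathrm{tip}(p)$ in $p$) and fixes all other monomials;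 a reduction by $R$ is a finite composite of one-step reductions by nonzero elements of $R$. *)

(* Defs.v *)
From HB Require Import structures.
From mathcomp Require Import all_boot all_algebra.
From mathcomp.multinomials Require Import monalg.

Set Implicit Arguments.
Unset Strict Implicit.
Unset Printing Implicit Defensive.

Import GRing.Theory.
Local Open Scope ring_scope.

(* Symbols: (false, j, i) is u_{j,i}, (true, j, i) is u^*_{j,i}.
   Indices are 0-based ordinals of 'I_n: ordinal j stands for j+1 in [n]. *)
Definition sym (n : nat) := (bool * 'I_n * 'I_n)%type.

Section Setup.
Variable n : nat.
Local Notation X := (sym n).

Definition u_ (j i : 'I_n) : X := (false, j, i).
Definition ustar_ (j i : 'I_n) : X := (true, j, i).

Definition inv (x : X) : X := (~~ x.1.1, x.1.2, x.2).

(* r(i) = n+1-i, i.e. rev_ord on 0-based indices *)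
Definition r (i : 'I_n) : 'I_n := rev_ord i.

Definition mat := 'I_n -> 'I_n -> X.

Definition mat_u : mat := fun j i => u_ j i.
Definition mat_t (v : mat) : mat := fun j i => v i j.
Definition mat_star (v : mat) : mat := fun j i => inv (v (r j) (r i)).
Definition mat_dag (v : mat) : mat := fun j i => inv (v (r i) (r j)).

Definition inM (v : mat) : Prop :=
  v = mat_u \/ v = mat_t mat_u \/ v = mat_star mat_u \/ v = mat_dag mat_u.

Definition lex_lt (a b : 'I_n * 'I_n) : bool :=
  (a.1 < b.1)%N || ((a.1 == b.1) && (a.2 < b.2)%N).

Definition ltX (x y : X) : bool :=
  match x.1.1, y.1.1 with
  | true, false => true
  | false, false => lex_lt (x.1.2, x.2) (y.1.2, y.2)
  | true, true => lex_lt (y.1.2, y.2) (x.1.2, x.2)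
  | false, true => false
  end.

Fixpoint lex_words (w1 w2 : seq X) : bool :=
  match w1, w2 with
  | x :: w1', y :: w2' => ltX x y || ((x == y) && lex_words w1' w2')
  | _, _ => false
  end.

Definition ltW (m1 m2 : {fmonom X}) : bool :=
  (size (val m1) < size (val m2))%N
  || ((size (val m1) == size (val m2)) && lex_words (val m1) (val m2)).

Definition leW (m1 m2 : {fmonom X}) : bool := (m1 == m2) || ltW m1 m2.

End Setup.

Section Algebra.
Variables (k : fieldType) (n : nat).
Local Notation X := (sym n).

Definition kX := {malg k[{fmonom X}]}.

Definition mono (m : {fmonom X}) : kX := << m >>.
Definition letter (x : X) : kX := mono (FMonom [:: x]).

Definition mmulW (m1 m2 : {fmonom X}) : {fmonom X} := FMonom (val m1 ++ val m2).
Definition mone : {fmonom X} := FMonom [::].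

Definition mdvd (t b : {fmonom X}) : Prop :=
  exists x y, b = mmulW (mmulW x t) y.

(* tip p: the <=-largest monomial with nonzero coefficient (p != 0) *)
Definition tip (p : kX) : {fmonom X} :=
  let s : seq {fmonom X} := finmap.enum_fset (msupp p) in
  foldr (fun m acc => if ltW acc m then m else acc) (head mone s) s.

Definition lc (p : kX) : k := p@_(tip p).

Definition bgen (v : mat n) (j i : 'I_n) : kX :=
  \sum_(s < n) letter (v j (r s)) * letter (mat_dag v s (r i)) - (j == i)%:R.

Definition inR (g : kX) : Prop :=
  exists v, inM v /\ exists j i, g = bgen v j i.

(* one-step reduction by p with fixed monomials a, c:
   a tip(p) c |-> a (tip(p) - p / lambda_p) c, all other monomials fixed,
   extended linearly *)
Definition red1 (p : kX) (a c : {fmonom X}) (q : kX) : kX :=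
  let w := mmulW (mmulW a (tip p)) c in
  q - q@_w *: mono w
    + q@_w *: (mono a * (mono (tip p) - (lc p)^-1 *: p) * mono c).

Definition reduction (phi : kX -> kX) : Prop :=
  exists s : seq (kX * {fmonom X} * {fmonom X}),
    (forall t, t \in s -> inR t.1.1 /\ t.1.1 != 0) /\
    phi =1 foldr (fun t f => red1 t.1.1 t.1.2 t.2 \o f) id s.

Definition overlap (g1 g2 : kX) (b1 b2 : {fmonom X}) : Prop :=
  inR g1 /\ inR g2 /\ g1 != 0 /\ g2 != 0 /\
  (b1, b2) != (mone, mone) /\
  mmulW (tip g1) b2 = mmulW b1 (tip g2) /\
  ~ mdvd (tip g2) b2 /\ ~ mdvd (tip g1) b1.

Definition resolves (g1 g2 : kX) (b1 b2 : {fmonom X}) : Prop :=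
  exists phi1 phi2, reduction phi1 /\ reduction phi2 /\
    phi1 ((mono (tip g1) - (lc g1)^-1 *: g1) * mono b2)
    = phi2 (mono b1 * (mono (tip g2) - (lc g2)^-1 *: g2)).

End Algebra.

(* Main.v *)
Require Import Defs.
From HB Require Import structures.
From mathcomp Require Import all_boot all_algebra.
From mathcomp Require Import finmap.
From mathcomp.multinomials Require Import monalg.
From mathcomp Require Import zify.
From Stdlib Require Import FunctionalExtensionality.
Set Implicit Arguments.
Unset Strict Implicit.
Unset Printing Implicit Defensive.
Import GRing.Theory.
Local Open Scope ring_scope.

Section Ord.
Variable n : nat.
Local Notation X := (sym n).

Lemma lex_irr (a : 'I_n * 'I_n) : lex_lt a a = false.
Proof. case: a => a b; rewrite /lex_lt /= -!val_eqE /=; lia. Qed.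

Lemma lex_trans (a b c : 'I_n * 'I_n) : lex_lt a b -> lex_lt b c -> lex_lt a c.
Proof. case: a b c => [a1 a2] [b1 b2] [c1 c2]; rewrite /lex_lt /= -!val_eqE /=; lia. Qed.

Lemma lex_total (a b : 'I_n * 'I_n) : a != b -> lex_lt a b || lex_lt b a.
Proof.
case: a b => [a1 a2] [b1 b2]; rewrite /lex_lt /= xpair_eqE -!val_eqE /=. lia.
Qed.

Lemma ltX_irr (x : X) : ltX x x = false.
Proof. case: x => [[[] j] i]; rewrite /ltX /= lex_irr //. Qed.

Lemma ltX_trans (x y z : X) : ltX x y -> ltX y z -> ltX x z.
Proof.
case: x y z => [[[] ? ?]] [[[] ? ?]] [[[] ? ?]]; rewrite /ltX //= => H1 H2;
 first [exact: lex_trans H1 H2 | exact: lex_trans H2 H1].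
Qed.

Lemma ltX_total (x y : X) : x != y -> ltX x y || ltX y x.
Proof.
case: x y => [[[] j i]] [[[] j' i']]; rewrite /ltX /= ?orbT // => H;
 [rewrite orbC|]; apply: lex_total; apply: contra H => /eqP [-> ->] //.
Qed.
End Ord.

Section Words.
Variable n : nat.
Local Notation X := (sym n).

Lemma lw_irr (w : seq X) : lex_words w w = false.
Proof. by elim: w => //= x w ->; rewrite ltX_irr eqxx. Qed.

Lemma lw_trans (a b c : seq X) : lex_words a b -> lex_words b c -> lex_words a c.
Proof.
elim: a b c => [|x a IH] [|y b] [|z c] //=.
case/orP=> [H1|/andP[/eqP <- H1]]; case/orP=> [H2|/andP[/eqP <- H2]].
- by rewrite (ltX_trans H1 H2).
- by rewrite H1.
- by rewrite H2.
- by rewrite eqxx (IH _ _ H1 H2) orbT.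
Qed.

Lemma lw_total (a b : seq X) : size a = size b -> a != b ->
  lex_words a b || lex_words b a.
Proof.
elim: a b => [|x a IH] [|y b] //= [] Hs H.
have [E|Hxy] := eqVneq x y.
  subst y; rewrite /= !ltX_irr /=; apply: IH => //; apply: contra H => /eqP -> //.
by case/orP: (ltX_total Hxy) => ->; rewrite ?orbT.
Qed.

Lemma ltW_irr (m : {fmonom X}) : ltW m m = false.
Proof. by rewrite /ltW ltnn eqxx lw_irr. Qed.

Lemma ltW_trans (a b c : {fmonom X}) : ltW a b -> ltW b c -> ltW a c.
Proof.
rewrite /ltW; case/orP=> [H1|/andP[/eqP E1 H1]]; case/orP=> [H2|/andP[/eqP E2 H2]].
- by rewrite (ltn_trans H1 H2).
- by rewrite -E2 H1.
- by rewrite E1 H2.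
- by rewrite E1 E2 eqxx (lw_trans H1 H2) orbT.
Qed.

Lemma ltW_total (a b : {fmonom X}) : a != b -> ltW a b || ltW b a.
Proof.
rewrite /ltW => H.
case: (ltngtP (size (val a)) (size (val b))) => [H1|H1|E]; [by []|by rewrite orbT|].
rewrite /=; apply: lw_total => //.
Qed.

Lemma leW_trans (a b c : {fmonom X}) : leW a b -> leW b c -> leW a c.
Proof.
rewrite /leW; case/orP=> [/eqP ->//|H1]; case/orP=> [/eqP <-|H2]; first by rewrite H1 orbT.
by rewrite (ltW_trans H1 H2) orbT.
Qed.

Lemma leW_antisym (a b : {fmonom X}) : leW a b -> leW b a -> a = b.
Proof.
rewrite /leW; case/orP=> [/eqP ->//|H1]; case/orP=> [/eqP ->//|H2].
by have := ltW_trans H1 H2; rewrite ltW_irr.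
Qed.

Definition fstep (m acc : {fmonom X}) := if ltW acc m then m else acc.

Lemma foldr_mem (x0 : {fmonom X}) s : foldr fstep x0 s \in x0 :: s.
Proof.
elim: s => [|x s IH] /=; first by rewrite inE.
rewrite /fstep; case: ifP => _; first by rewrite !inE eqxx orbT.
move: IH; rewrite !inE => /orP[->//|->]; by rewrite !orbT.
Qed.

Lemma foldr_max (x0 : {fmonom X}) s y : y \in s -> leW y (foldr fstep x0 s).
Proof.
elim: s => [|x s IH] //=; rewrite inE /fstep.
case: ifP => Hlt.
  case/orP=> [/eqP ->|Hy]; first by rewrite /leW eqxx.
  by apply: leW_trans (IH Hy) _; rewrite /leW Hlt orbT.
case/orP=> [/eqP ->|Hy]; last exact: IH.
set F := foldr _ _ _ in Hlt *.
have [->|Hne] := eqVneq x F; first by rewrite /leW eqxx.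
by move: (ltW_total Hne); rewrite Hlt orbF /leW => ->; rewrite orbT.
Qed.

End Words.

Section Alg.
Variables (k : fieldType) (n : nat).
Local Notation X := (sym n).
Local Notation kX := (kX k n).

Lemma tipP (p : kX) m : m \in msupp p ->
  (forall m', m' \in msupp p -> leW m' m) -> tip p = m.
Proof.
move=> Hm Hmax; rewrite /tip.
set s := finmap.enum_fset (msupp p).
have Hms : m \in s by [].
change (foldr (@fstep n) (head (Defs.mone n) s) s = m).
set F := foldr _ _ _.
have H1 : F \in s.
  have := foldr_mem (head (Defs.mone n) s) s; rewrite -/F inE => /orP[/eqP ->|//].
  by case: s Hms {F} => [|x s'] //= _; rewrite inE eqxx.
apply: leW_antisym; first exact: Hmax.
exact: foldr_max.
Qed.
End Alg.

Section Alg2.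
Variables (k : fieldType) (n : nat).
Local Notation X := (sym n).
Local Notation kX := (kX k n).

Lemma mmulWE (a b : {fmonom X}) : mmulW a b = mmul a b.
Proof. by apply/val_inj; rewrite /= fmM. Qed.

Lemma mono_mul (a b : {fmonom X}) : mono k a * mono k b = mono k (mmulW a b).
Proof. by rewrite /mono malgM_def fgmulUU mulr1 mmulWE. Qed.

Lemma mono1 : mono k (Defs.mone n) = 1.
Proof.
rewrite /mono; have -> : Defs.mone n = (mone : {fmonom X}).
  by apply/val_inj; rewrite /= fm1.
by [].
Qed.

Lemma mcoeff_mono (m m' : {fmonom X}) : (mono k m)@_m' = (m == m')%:R.
Proof. exact: mcoeffU1. Qed.

Lemma letter2 (x y : X) : letter k x * letter k y = mono k (FMonom [:: x; y]).
Proof. by rewrite /letter mono_mul. Qed.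

Lemma letter3 (x y z : X) :
  letter k x * letter k y * letter k z = mono k (FMonom [:: x; y; z]).
Proof. by rewrite letter2 /letter mono_mul. Qed.

Lemma fm_eq (s1 s2 : seq X) : (FMonom s1 == FMonom s2) = (s1 == s2).
Proof. by rewrite fmP. Qed.

End Alg2.

Section MFacts0.
Variables (n : nat).
Local Notation X := (sym n).

Lemma rK (i : 'I_n) : r (r i) = i.
Proof. exact: rev_ordK. Qed.

Lemma dagK (v : mat n) : mat_dag (mat_dag v) = v.
Proof.
apply: functional_extensionality => j; apply: functional_extensionality => i.
rewrite /mat_dag /inv !rK /=; by case: (v j i) => [[[] x] y].
Qed.

Lemma r_inj : injective (@r n).
Proof. exact: rev_ord_inj. Qed.

Lemma inM_inj2 (v : mat n) j a b : inM v -> v j a = v j b -> a = b.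
Proof.
case=> [->|[->|[->|->]]];
  rewrite /mat_t /mat_star /mat_dag /mat_u /u_ /inv /= => H; injection H => *;
  first [assumption | apply: val_inj; move: (ltn_ord a) (ltn_ord b) => /=; lia].
Qed.

End MFacts0.
Section MFacts.
Variables (n : nat) (z : 'I_n).
Hypothesis hz : val z = 0%N.
Local Notation X := (sym n).

Lemma inM_lt (v : mat n) j s : inM v -> s != z -> ltX (v j (r s)) (v j (r z)).
Proof.
move=> Hv; rewrite -val_eqE hz /= => Hs.
case: Hv => [->|[->|[->|->]]];
  rewrite /mat_t /mat_star /mat_dag /mat_u /u_ /inv /ltX /lex_lt /= -!val_eqE /=;
  rewrite ?rK /= hz; move: (ltn_ord s) (ltn_ord j); lia.
Qed.
End MFacts.

Section Tip.
Variables (k : fieldType) (n : nat) (z : 'I_n).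
Hypothesis hz : val z = 0%N.
Hypothesis hn : (1 < n)%N.
Local Notation X := (sym n).
Local Notation kX := (kX k n).

Definition w2 (v : mat n) j i (s : 'I_n) : {fmonom X} :=
  FMonom [:: v j (r s); mat_dag v s (r i)].

Lemma mcoeff_nat (b : bool) (m : {fmonom X}) :
  (b%:R : kX)@_m = (b && (m == FMonom [::]))%:R.
Proof.
rewrite mcoeffMn mcoeff1; case: b => //=.
have -> : (m == (mone : {fmonom X})) = (m == FMonom [::]) by rewrite !fmP fm1.
by [].
Qed.

Lemma bgen_coeff (v : mat n) j i m : (bgen k v j i)@_m =
  \sum_(s < n) (w2 v j i s == m)%:R - ((j == i) && (m == FMonom [::]))%:R.
Proof.
rewrite /bgen mcoeffB raddf_sum mcoeff_nat; congr (_ - _).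
by apply: eq_bigr => s _; rewrite letter2; exact: mcoeff_mono.
Qed.

Lemma w2_inj (v : mat n) j i s t : inM v -> (w2 v j i s == w2 v j i t) = (s == t).
Proof.
move=> Hv; apply/idP/idP => [|/eqP -> //].
rewrite /w2 fm_eq eqseq_cons => /andP[/eqP /(inM_inj2 Hv) /r_inj -> _] //.
Qed.

Lemma sum_pick (F : 'I_n -> {fmonom X}) (t : 'I_n) :
  (forall s, (F s == F t) = (s == t)) ->
  \sum_(s < n) ((F s == F t)%:R : k) = 1.
Proof.
move=> HF; rewrite (bigD1 t) //= eqxx big1 ?addr0 // => s Hs.
by rewrite HF (negbTE Hs).
Qed.

Lemma sum_none (F : 'I_n -> {fmonom X}) m :
  (forall s, F s != m) -> \sum_(s < n) ((F s == m)%:R : k) = 0.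
Proof. by move=> HF; rewrite big1 // => s _; rewrite (negbTE (HF s)). Qed.

Lemma tip_bgen (v : mat n) j i : inM v -> tip (bgen k v j i) = w2 v j i z.
Proof.
move=> Hv; apply: tipP.
  rewrite -mcoeff_neq0 bgen_coeff sum_pick; last by move=> s; exact: w2_inj.
  by rewrite /w2 fm_eq andbF subr0 oner_eq0.
move=> m'; rewrite -mcoeff_neq0 bgen_coeff.
have [->|Hne] := eqVneq m' (FMonom [::]).
  by move=> _; rewrite /leW /ltW orbC /w2 /=.
rewrite andbF subr0.
have [/existsP [s /eqP Hs]|Hno] := boolP [exists s, w2 v j i s == m'].
  move=> _; rewrite -Hs /leW.
  have [->|Hsz] := eqVneq s z; first by rewrite eqxx.
  by rewrite /ltW /w2 /= (inM_lt hz _ Hv) // orbT.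
by rewrite sum_none ?eqxx // => s; apply/negP => E; move/negP: Hno; apply; apply/existsP; exists s.
Qed.
End Tip.

Section Tip2.
Variables (k : fieldType) (n : nat) (z : 'I_n).
Hypothesis hz : val z = 0%N.
Local Notation X := (sym n).
Local Notation kX := (kX k n).

Lemma lc_bgen (v : mat n) j i : inM v -> lc (bgen k v j i) = 1.
Proof.
move=> Hv; rewrite /lc (tip_bgen k hz) // bgen_coeff sum_pick; last by move=> s; exact: w2_inj.
by rewrite /w2 fm_eq andbF subr0.
Qed.

Lemma bgen_neq0 (v : mat n) j i : inM v -> bgen k v j i != 0.
Proof.
move=> Hv; apply/eqP => E; have := lc_bgen j i Hv; rewrite /lc E mcoeff0.
by move/eqP; rewrite eq_sym oner_eq0.
Qed.
End Tip2.

Section Pairs.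
Variables (n : nat) (z : 'I_n).
Hypothesis hz : val z = 0%N.
Hypothesis hn : (1 < n)%N.

Lemma pair_cases (v w : mat n) i1 j2 : inM v -> inM w ->
  mat_dag w z (r i1) = v j2 (r z) -> [/\ i1 = z, j2 = z & w = mat_dag v].
Proof.
move=> Hv Hw; move: (ltn_ord i1) (ltn_ord j2) => L1 L2.
case: Hv => [->|[->|[->|->]]]; case: Hw => [->|[->|[->|->]]];
  rewrite /mat_t /mat_star /mat_dag /mat_u /u_ /Defs.inv /= ?rK => /eqP;
  rewrite !xpair_eqE -!val_eqE /= ?hz => H;
  try (exfalso; lia).
all: split; try (apply: val_inj; rewrite hz /=; lia).
all: apply functional_extensionality => a; apply functional_extensionality => b.
all: by rewrite ?rK.
Qed.
End Pairs.

Section WordSplit.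
Variables (n : nat).
Local Notation X := (sym n).

Lemma word_split (x1 y1 x2 y2 : X) (b1 b2 : {fmonom X}) :
  mmulW (FMonom [:: x1; y1]) b2 = mmulW b1 (FMonom [:: x2; y2]) ->
  (b1, b2) != (Defs.mone n, Defs.mone n) ->
  ~ mdvd (FMonom [:: x1; y1]) b1 ->
  [/\ b1 = FMonom [:: x1], y1 = x2 & b2 = FMonom [:: y2]].
Proof.
case: b1 b2 => [s1] [s2] /(congr1 val) /= E Hne Hd.
case: s1 E Hne Hd => [|a [|b s1]] /= E Hne Hd.
- case: E => _ _ E; subst s2.
  by move: Hne; rewrite /Defs.mone eqxx.
- by case: E => -> -> ->.
- exfalso; apply: Hd; exists (Defs.mone n), (FMonom s1).
  by case: E => -> -> _; apply: val_inj.
Qed.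
End WordSplit.

Section Red.
Variables (k : fieldType) (n : nat).
Local Notation X := (sym n).
Local Notation kX := (kX k n).

Definition Wd (p : kX) (a c : {fmonom X}) := mmulW (mmulW a (tip p)) c.

Lemma red1_alg (q a t p c W : kX) (x : k) : a * t * c = W ->
  q - x *: W + x *: (a * (t - p) * c) = q - x *: (a * p * c).
Proof. by move=> <-; rewrite mulrBr mulrBl scalerBr addrA subrK. Qed.

Lemma red1E (p : kX) a c q : lc p = 1 ->
  red1 p a c q = q - q@_(Wd p a c) *: (mono k a * p * mono k c).
Proof.
move=> Hl; rewrite /red1 Hl invr1 scale1r -/(Wd p a c).
have Hw : mono k a * mono k (tip p) * mono k c = mono k (Wd p a c) by rewrite !mono_mul.
exact: red1_alg Hw.
Qed.

Lemma fold_red (L : seq 'I_n) (P : 'I_n -> kX) (A C : 'I_n -> {fmonom X}) (Q : kX) :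
  uniq L ->
  (forall s, s \in L -> lc (P s) = 1) ->
  (forall s, s \in L -> Q@_(Wd (P s) (A s) (C s)) = -1) ->
  (forall s t, s \in L -> t \in L -> s != t ->
     (mono k (A t) * P t * mono k (C t))@_(Wd (P s) (A s) (C s)) = 0) ->
  foldr (fun t f => red1 t.1.1 t.1.2 t.2 \o f) id [seq (P s, A s, C s) | s <- L] Q
  = Q + \sum_(s <- L) mono k (A s) * P s * mono k (C s).
Proof.
elim: L => [|s L IH] /=; first by rewrite big_nil addr0.
case/andP=> HsL Hu Hlc HQ H0.
rewrite IH //; last 3 first.
- by move=> t Ht; apply: Hlc; rewrite inE Ht orbT.
- by move=> t Ht; apply: HQ; rewrite inE Ht orbT.
- by move=> t u Ht Hu' Htu; apply: H0; rewrite // inE ?Ht ?Hu' orbT.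
rewrite red1E; last by apply: Hlc; rewrite inE eqxx.
have Hc : (Q + \sum_(t <- L) mono k (A t) * P t * mono k (C t))@_(Wd (P s) (A s) (C s)) = -1.
  rewrite mcoeffD HQ ?inE ?eqxx // raddf_sum /= big_seq big1 ?addr0 //.
  move=> t Ht; apply: H0; rewrite ?inE ?eqxx ?Ht ?orbT //.
  by apply: contraNneq HsL => ->.
rewrite Hc scaleN1r opprK big_cons -addrA; congr (_ + _); exact: addrC.
Qed.
End Red.


Section Expand.
Variables (k : fieldType) (n : nat).
Local Notation X := (sym n).
Local Notation kX := (kX k n).

Lemma lmul_bgen (a : X) (v : mat n) j i :
  letter k a * bgen k v j i =
  \sum_(t < n) mono k (FMonom [:: a; v j (r t); mat_dag v t (r i)])
  - letter k a *+ (j == i).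
Proof.
rewrite /bgen mulrBr mulr_sumr; congr (_ - _); last exact: mulr_natr.
by apply: eq_bigr => t _; rewrite mulrA letter3.
Qed.

Lemma bgen_rmul (c : X) (v : mat n) j i :
  bgen k v j i * letter k c =
  \sum_(t < n) mono k (FMonom [:: v j (r t); mat_dag v t (r i); c])
  - letter k c *+ (j == i).
Proof.
rewrite /bgen mulrBl mulr_suml; congr (_ - _); last exact: mulr_natl.
by apply: eq_bigr => t _; rewrite letter3.
Qed.

Lemma coeff_expand (F : 'I_n -> seq X) (c : X) (b : bool) (m : {fmonom X}) :
  size (val m) = 3 ->
  (\sum_(t < n) mono k (FMonom (F t)) - letter k c *+ b)@_m =
  \sum_(t < n) ((FMonom (F t) == m)%:R).
Proof.
move=> Hm; rewrite mcoeffB raddf_sum mcoeffMn.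
have -> : (letter k c)@_m = 0.
  rewrite /letter mcoeff_mono; case: eqP => // E; by move: Hm; rewrite -E.
rewrite mul0rn subr0; apply: eq_bigr => t _; exact: mcoeff_mono.
Qed.

Lemma sum_and (s : 'I_n) (b : 'I_n -> bool) :
  \sum_(t < n) ((((t == s) && b t))%:R : k) = (b s)%:R.
Proof.
rewrite (bigD1 s) //= eqxx big1 ?addr0 // => t Ht.
by rewrite (negbTE Ht).
Qed.

Lemma sum_natpick (F : 'I_n -> kX) (i : 'I_n) :
  \sum_(s < n) F s *+ (s == i) = F i.
Proof.
rewrite (bigD1 i) //= eqxx big1 ?addr0 // => t Ht.
by rewrite (negbTE Ht).
Qed.

Lemma sum_natpick' (F : 'I_n -> kX) (i : 'I_n) :
  \sum_(s < n) F s *+ (i == s) = F i.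
Proof.
by rewrite -(sum_natpick F i); apply: eq_bigr => s _; rewrite eq_sym.
Qed.
End Expand.


Section Res.
Variables (k : fieldType) (n : nat) (z : 'I_n).
Hypothesis hz : val z = 0%N.
Local Notation X := (sym n).
Local Notation kX := (kX k n).

Lemma inM_eq (v : mat n) j a b : inM v -> (v j (r a) == v j (r b)) = (a == b).
Proof.
move=> Hv; apply/idP/idP => [/eqP /(inM_inj2 Hv) /r_inj -> //|/eqP -> //].
Qed.

Lemma sum_neq (F : 'I_n -> kX) :
  \sum_(s < n | s != z) F s = \sum_(s < n) F s - F z.
Proof. by rewrite [in RHS](bigD1 z) //= addrC addrK. Qed.

Lemma mulr_mone (x : kX) : x * mono k (Defs.mone n) = x.
Proof. by rewrite mono1 mulr1. Qed.
Lemma mul_mone (x : kX) : mono k (Defs.mone n) * x = x.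
Proof. by rewrite mono1 mul1r. Qed.

Lemma sumXY (v : mat n) l i : inM v ->
  \sum_(s < n) mono k (FMonom [:: mat_dag v l (r s)]) * bgen k v s i * mono k (Defs.mone n)
  = \sum_(t < n) mono k (Defs.mone n) * bgen k (mat_dag v) l t * mono k (FMonom [:: mat_dag v t (r i)]).
Proof.
move=> Hv.
transitivity (\sum_(s < n) (\sum_(t < n) mono k (FMonom [:: mat_dag v l (r s); v s (r t); mat_dag v t (r i)])
   - letter k (mat_dag v l (r s)) *+ (s == i))).
  apply: eq_bigr => s _; rewrite mulr_mone; exact: lmul_bgen.
transitivity (\sum_(t < n) (\sum_(s < n) mono k (FMonom [:: mat_dag v l (r s); v s (r t); mat_dag v t (r i)])
   - letter k (mat_dag v t (r i)) *+ (l == t))); last first.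
  apply: eq_bigr => t _; rewrite mul_mone bgen_rmul dagK //.
rewrite sumrB [in RHS]sumrB.
rewrite sum_natpick sum_natpick'.
rewrite [X in X - _ = _]exchange_big.
by [].
Qed.


Lemma overlap_form (hn : (1 < n)%N) (g1 g2 : kX) b1 b2 : overlap g1 g2 b1 b2 ->
  exists v l i, [/\ inM v, inM (mat_dag v), g1 = bgen k (mat_dag v) l z,
    g2 = bgen k v z i & b1 = FMonom [:: mat_dag v l (r z)]
    /\ b2 = FMonom [:: mat_dag v z (r i)]].
Proof.
case=> [[w [Hw [j1 [i1 E1]]]] [[v [Hv [j2 [i2 E2]]]] [_ [_ [Hne [Heq [_ Hd]]]]]]].
rewrite E1 E2 !(tip_bgen k hz) // /w2 in Heq Hd.
case: (word_split Heq Hne Hd) => Eb1 Ey Eb2.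
case: (pair_cases hz hn Hv Hw Ey) => Ei1 Ej2 Ew; subst.
by exists v, j1, i2; split.
Qed.
End Res.


Section Res2.
Variables (k : fieldType) (n : nat) (z : 'I_n).
Hypothesis hz : val z = 0%N.
Local Notation X := (sym n).
Local Notation kX := (kX k n).

Lemma sum_eq1 (F : 'I_n -> seq X) s : (forall t, (F t == F s) = (t == s)) ->
  \sum_(t < n) ((FMonom (F t) == FMonom (F s))%:R : k) = 1.
Proof.
move=> HF; apply: (@sum_pick k n (fun t => FMonom (F t))) => t.
by rewrite fm_eq HF.
Qed.

Lemma subr_eqr (a b c : kX) : b = c -> a - b = a - c.
Proof. by move=> ->. Qed.

Lemma mulrBl_eq (a b c d : kX) : a * c = d -> (a - b) * c = d - b * c.
Proof. by move=> <-; rewrite mulrBl. Qed.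

Lemma mul_mone2 (a b : kX) : mono k (Defs.mone n) * a * b = a * b.
Proof. by rewrite mul_mone. Qed.

Lemma swap4 (a b c d : kX) : a - b + (c - d) = a - d + (c - b).
Proof. rewrite addrACA [RHS]addrACA; congr (_ + _); exact: addrC. Qed.

Lemma final_eq (Q1 Q2 T P1 P2 SX SY RX RY : kX) :
  Q1 = T - P1 -> Q2 = T - P2 -> RX = SX - P2 -> RY = SY - P1 -> SX = SY ->
  Q1 + RX = Q2 + RY.
Proof. move=> -> -> -> -> ->; exact: swap4. Qed.

Lemma resolve (v : mat n) l i : inM v -> inM (mat_dag v) ->
  resolves (bgen k (mat_dag v) l z) (bgen k v z i)
    (FMonom [:: mat_dag v l (r z)]) (FMonom [:: mat_dag v z (r i)]).
Proof.
move=> Hv HD.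
have HDD := dagK v.
rewrite /resolves (lc_bgen k hz) // (lc_bgen k hz) // invr1 !scale1r.
rewrite (tip_bgen k hz) // (tip_bgen k hz) //.
set L := [seq s <- index_enum 'I_n | s != z].
have HL : uniq L by rewrite filter_uniq // index_enum_uniq.
have memL : forall s, (s \in L) = (s != z).
  by move=> s; rewrite mem_filter mem_index_enum andbT.
set S1 := [seq (bgen k v s i, FMonom [:: mat_dag v l (r s)], Defs.mone n) | s <- L].
set S2 := [seq (bgen k (mat_dag v) l t, Defs.mone n, FMonom [:: mat_dag v t (r i)]) | t <- L].
exists (foldr (fun t f => red1 t.1.1 t.1.2 t.2 \o f) id S1).
exists (foldr (fun t f => red1 t.1.1 t.1.2 t.2 \o f) id S2).
split; [|split].
- exists S1; split => // t /mapP [s _ ->] /=; split; last exact: (bgen_neq0 k hz).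
  by exists v; split => //; exists s, i.
- exists S2; split => // t /mapP [s _ ->] /=; split; last exact: (bgen_neq0 k hz).
  by exists (mat_dag v); split => //; exists l, s.
have W1 : forall s, Wd (bgen k v s i) (FMonom [:: mat_dag v l (r s)]) (Defs.mone n)
    = FMonom [:: mat_dag v l (r s); v s (r z); mat_dag v z (r i)].
  by move=> s; rewrite /Wd (tip_bgen k hz) //; apply: val_inj.
have W2 : forall t, Wd (bgen k (mat_dag v) l t) (Defs.mone n) (FMonom [:: mat_dag v t (r i)])
    = FMonom [:: mat_dag v l (r z); v z (r t); mat_dag v t (r i)].
  by move=> t; rewrite /Wd (tip_bgen k hz) //; apply: val_inj => /=; rewrite HDD.
have HQ1 : forall s, s \in L ->
   ((mono k (w2 (mat_dag v) l z z) - bgen k (mat_dag v) l z) *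
     mono k (FMonom [:: mat_dag v z (r i)]))@_(Wd (bgen k v s i) (FMonom [:: mat_dag v l (r s)]) (Defs.mone n)) = -1.
  move=> s; rewrite memL => Hs; rewrite W1 mulrBl mcoeffB mono_mul mcoeff_mono.
  rewrite bgen_rmul coeff_expand //.
  rewrite fmP /= eqseq_cons (inM_eq _ _ _ HD) eq_sym (negbTE Hs) /= sub0r HDD.
  rewrite (@sum_eq1 (fun t => [:: mat_dag v l (r t); v t (r z); mat_dag v z (r i)]) s) //.
  move=> t; rewrite eqseq_cons (inM_eq _ _ _ HD); case: eqP => [->|//]; by rewrite !eqxx.
have H01 : forall s t, s \in L -> t \in L -> s != t ->
   (mono k (FMonom [:: mat_dag v l (r t)]) * bgen k v t i * mono k (Defs.mone n))@_(Wd (bgen k v s i) (FMonom [:: mat_dag v l (r s)]) (Defs.mone n)) = 0.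
  move=> s t _ _ Hst; rewrite W1 mulr_mone lmul_bgen coeff_expand //.
  apply: big1 => u _; by rewrite fm_eq eqseq_cons (inM_eq _ _ _ HD) eq_sym (negbTE Hst).
have HQ2 : forall t, t \in L ->
   (mono k (FMonom [:: mat_dag v l (r z)]) * (mono k (w2 v z i z) - bgen k v z i))@_(Wd (bgen k (mat_dag v) l t) (Defs.mone n) (FMonom [:: mat_dag v t (r i)])) = -1.
  move=> t; rewrite memL => Ht; rewrite W2 mulrBr mcoeffB mono_mul mcoeff_mono lmul_bgen coeff_expand //.
  rewrite fmP /= eqseq_cons eqxx /= eqseq_cons (inM_eq _ _ _ Hv) eq_sym (negbTE Ht) /= sub0r.
  rewrite (@sum_eq1 (fun u => [:: mat_dag v l (r z); v z (r u); mat_dag v u (r i)]) t) //.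
  move=> u; rewrite eqseq_cons eqxx /= eqseq_cons (inM_eq _ _ _ Hv); case: eqP => [->|//]; by rewrite !eqxx.
have H02 : forall s t, s \in L -> t \in L -> s != t ->
   (mono k (Defs.mone n) * bgen k (mat_dag v) l t * mono k (FMonom [:: mat_dag v t (r i)]))@_(Wd (bgen k (mat_dag v) l s) (Defs.mone n) (FMonom [:: mat_dag v s (r i)])) = 0.
  move=> s t _ _ Hst; rewrite W2 mul_mone bgen_rmul coeff_expand // HDD.
  apply: big1 => u _; rewrite fm_eq eqseq_cons (inM_eq _ _ _ HD); case: eqP => [->|//] /=.
  by rewrite eqseq_cons (inM_eq _ _ _ Hv) eq_sym (negbTE Hst).
have lc1 : forall s, s \in L -> lc (bgen k v s i) = 1 by move=> s _; exact: (lc_bgen k hz).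
have lc2 : forall s, s \in L -> lc (bgen k (mat_dag v) l s) = 1 by move=> s _; exact: (lc_bgen k hz).
rewrite /S1 (fold_red HL lc1 HQ1 H01) /S2 (fold_red HL lc2 HQ2 H02).
have EL : forall F : 'I_n -> kX, \sum_(s <- L) F s = \sum_(s < n) F s - F z.
  by move=> F; rewrite big_filter sum_neq.
have Ew : mmulW (w2 (mat_dag v) l z z) (FMonom [:: mat_dag v z (r i)])
   = mmulW (FMonom [:: mat_dag v l (r z)]) (w2 v z i z).
  by apply: val_inj; rewrite /mmulW /w2 HDD.
have ET : mono k (w2 (mat_dag v) l z z) * mono k (FMonom [:: mat_dag v z (r i)])
   = mono k (FMonom [:: mat_dag v l (r z)]) * mono k (w2 v z i z).
  by rewrite [LHS]mono_mul [RHS]mono_mul Ew.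
apply: (final_eq
  (T := mono k (FMonom [:: mat_dag v l (r z)]) * mono k (w2 v z i z))
  (P1 := bgen k (mat_dag v) l z * mono k (FMonom [:: mat_dag v z (r i)]))
  (P2 := mono k (FMonom [:: mat_dag v l (r z)]) * bgen k v z i)
  (SX := \sum_(s < n) mono k (FMonom [:: mat_dag v l (r s)]) * bgen k v s i * mono k (Defs.mone n))
  (SY := \sum_(s < n) mono k (Defs.mone n) * bgen k (mat_dag v) l s * mono k (FMonom [:: mat_dag v s (r i)]))).
- exact: (mulrBl_eq _ ET).
- exact: mulrBr.
- rewrite EL; apply: subr_eqr; exact: mulr_mone.
- rewrite EL; apply: subr_eqr; exact: mul_mone2.
- exact: sumXY.
Qed.
End Res2.


Theorem lemma3p6 (k : fieldType) (n : nat) (hn : (2 <= n)%N)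
    (g1 g2 : kX k n) (b1 b2 : {fmonom sym n}) :
  overlap g1 g2 b1 b2 ->
  (exists v : mat n, inM v /\
     exists (l i one : 'I_n), nat_of_ord one = 0%N /\
       g1 = bgen k (mat_dag v) l one /\
       g2 = bgen k v one i /\
       b1 = FMonom [:: mat_dag v l (r one)] /\
       b2 = FMonom [:: mat_dag v one (r i)])
  /\ resolves g1 g2 b1 b2.
Proof.
move=> Hov.
have hn0 : (0 < n)%N by apply: leq_trans hn.
pose z := Ordinal hn0.
have hz : val z = 0%N by [].
case: (overlap_form hz hn Hov) => v [l [i [Hv HD E1 E2 [E3 E4]]]].
split.
  exists v; split => //; exists l, i, z; by [].
rewrite E1 E2 E3 E4; exact: (resolve k hz).
Qed.
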